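(* On the hard instance $G_{k,m}$ described in the context, for all sufficiently large $k$ (independently of $m$), running Water-Filling yields $x_{u_{t,i}}=1$ immediately after the deadline of $u_{t,i}$, for every $t\in[m-1]$ and $i\in[k]$.
   Context: Fully online fractional matching model: an undirected graph is revealed online; each step is the arrival or the deadline of a vertex; at arrival, edges to previously arrived vertices are revealed; every neighbor of $v$ arrives before $v$'s deadline. The algorithm maintains $x_{uv}\ge 0$ with water-level $x_w:=\sum_{z}x_{wz}\le1$; $x_{uv}$ (with $u$ having the earlier deadline) may only be increased at $u$'s deadline. Water-Filling: at the deadline of $u$, with $N(u)$ the neighbors of $u$ whose deadlines have not been reached, while $x_u<1$ and $\min_{v\in N(u)}x_v<1$, continuously increase $x_{uv}$ at equal rates for all $v\in\arg\min_{v\in N(u)}x_v$. Let $c=2-\sqrt2$, $f(x)=\tfrac12(\ln(1-x)+\ln(1-c+x))+\frac{1}{\sqrt2(x-1)}+\frac{2+\sqrt2-\ln(1-c)}{2}$ on $[0,c]$ (a strictly decreasing bijection onto $[0,1]$), and $h(x)=f(c-f^{-1}(x))$ for $x\in[0,1]$. Hard instance $G_{k,m}$: vertex set $\bigcup_{t\in[m]}(U_t\cup V_t)$ with $U_t=\{u_{t,1},\dots,u_{t,k}\}$, $V_t=\{v_{t,1},\dots,v_{t,k}\}$. Edges: $(u_{t,i},v_{t,j})$ for all $t\in[m]$, $i\in[k]$, $j\ge i$; and $(u_{t,i},u_{t+1,j})$ for all $t\in[m-1]$, $i\in[k]$, $1\le j\le\lfloor k\,h(\tfrac{i-1}{k})\rfloor$.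 All vertices arrive before any deadline. The deadlines of the $u$-vertices come first, in lexicographic order of $(t,i)$; afterwards the deadlines of all $v$-vertices are reached (in any order). *)

(* Defs.v *)
From Stdlib Require Import Reals Lra Lia List Arith ZArith Bool ClassicalEpsilon.
Open Scope bool_scope.
Import ListNotations.
Open Scope R_scope.
Open Scope bool_scope.

Definition c_const : R := 2 - sqrt 2.

Definition f_fun (x : R) : R :=
  / 2 * (ln (1 - x) + ln (1 - c_const + x))
  + / (sqrt 2 * (x - 1))
  + (2 + sqrt 2 - ln (1 - c_const)) / 2.

(* f^{-1} on [0,1]: the (unique, f being a strictly decreasing bijection
   [0,c] -> [0,1]) x in [0,c] with f x = y. *)
Definition f_inv (y : R) : R :=
  epsilon (inhabits 0) (fun x => 0 <= x <= c_const /\ f_fun x = y).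

Definition h_fun (x : R) : R := f_fun (c_const - f_inv x).

Definition floor_nat (r : R) : nat := Z.to_nat (Int_part r).

(* All vertices arrive before any deadline, so only the deadline events
   matter.  State = water levels x_w of all vertices. *)

Section WF.
Context {V : Type} (eqdec : forall x y : V, {x = y} + {x <> y}).

Definition inb (v : V) (l : list V) : bool :=
  existsb (fun w => if eqdec v w then true else false) l.

Definition open_nbrs (verts : list V) (adj : V -> V -> bool)
  (done : list V) (u : V) : list V :=
  filter (fun v => adj u v && negb (inb v done)) verts.

Definition sumR (l : list R) : R := fold_right Rplus 0 l.

(* One Water-Filling deadline step at u with open neighbour list N:
   neighbour levels are raised (at equal rates on the current minima) to a
   common water level [lvl] <= 1, the amount added is added to x_u, and the
   process stops exactly when x_u = 1 or all neighbours are full. *)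
Definition wf_step (N : list V) (u : V) (L L' : V -> R) : Prop :=
  exists lvl : R,
    lvl <= 1 /\
    (forall v, In v N -> L' v = Rmax (L v) lvl) /\
    (forall w, w <> u -> ~ In w N -> L' w = L w) /\
    L' u = L u + sumR (map (fun v => L' v - L v) N) /\
    L' u <= 1 /\
    (L' u = 1 \/ forall v, In v N -> L' v = 1).

Inductive wf_run (verts : list V) (adj : V -> V -> bool)
  : list V -> (V -> R) -> list V -> (V -> R) -> Prop :=
| wf_run_nil : forall done L, wf_run verts adj done L [] L
| wf_run_cons : forall done L u rest L1 L2,
    wf_step (open_nbrs verts adj done u) u L L1 ->
    wf_run verts adj (u :: done) L1 rest L2 ->
    wf_run verts adj done L (u :: rest) L2.
End WF.

Inductive gvert : Type :=
| GU (t i : nat)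
| GV (t j : nat).

Definition gvert_eqdec : forall x y : gvert, {x = y} + {x <> y}.
Proof. decide equality; apply Nat.eq_dec. Defined.

Definition hcount (k i : nat) : nat :=
  floor_nat (INR k * h_fun (INR (i - 1) / INR k)).

Definition G_verts (k m : nat) : list gvert :=
  flat_map (fun t => map (GU t) (seq 1 k)) (seq 1 m) ++
  flat_map (fun t => map (GV t) (seq 1 k)) (seq 1 m).

Definition idx_ok (k m t i : nat) : bool :=
  (1 <=? t)%nat && (t <=? m)%nat && (1 <=? i)%nat && (i <=? k)%nat.

Definition G_edge_dir (k m : nat) (a b : gvert) : bool :=
  match a, b with
  | GU t i, GV t' j =>
      idx_ok k m t i && idx_ok k m t' j && (t =? t')%nat && (i <=? j)%nat
  | GU t i, GU t' j =>
      idx_ok k m t i && idx_ok k m t' j && (t' =? t + 1)%nat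
      && (j <=? hcount k i)%nat
  | _, _ => false
  end.

Definition G_adj (k m : nat) (a b : gvert) : bool :=
  G_edge_dir k m a b || G_edge_dir k m b a.

(* deadline order: u-vertices in lexicographic order of (t,i), then the
   v-vertices (their order is irrelevant; we fix lexicographic order). *)
Definition G_deadlines (k m : nat) : list gvert :=
  flat_map (fun t => map (GU t) (seq 1 k)) (seq 1 m) ++
  flat_map (fun t => map (GV t) (seq 1 k)) (seq 1 m).

(* Main.v *)
Require Import Defs.
From Stdlib Require Import Reals Lra Lia.
From Coquelicot Require Import Coquelicot.
From Stdlib Require Import ClassicalEpsilon ZArith List Arith Bool FunctionalExtensionality.
Open Scope R_scope.
Definition s2 := sqrt 2.
Lemma s2_sq : s2 * s2 = 2. Proof. unfold s2; apply sqrt_sqrt; lra. Qed.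
Lemma s2_pow2 : s2 ^ 2 = 2. Proof. rewrite <- s2_sq; ring. Qed.
Lemma s2_bounds : 1.4142 < s2 < 1.4143.
Proof. unfold s2. split.
- apply Rsqr_incrst_0; try lra; [|apply sqrt_pos]. rewrite Rsqr_sqrt; [unfold Rsqr; lra|lra].
- apply Rsqr_incrst_0; try lra; [|apply sqrt_pos]. rewrite Rsqr_sqrt; [unfold Rsqr; lra|lra].
Qed.
Definition q (y : R) : R := / (2*(1-y)) - / (2*(1-c_const+y)) + / (s2 * (1-y)^2).

Lemma q_mono : forall a b, 0 <= a -> a <= b -> b <= c_const -> q a <= q b.
Proof.
  intros a b Ha Hab Hb. pose proof s2_bounds. unfold q, c_const in *. fold s2 in *.
  assert (h1: / (2*(1-a)) <= / (2*(1-b))) by (apply Rinv_le_contravar; lra).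
  assert (h2: / (2*(1-(2-s2)+b)) <= / (2*(1-(2-s2)+a))) by (apply Rinv_le_contravar; lra).
  assert (hb: 0 < 1 - b) by lra.
  assert (hab2: (1-b)^2 <= (1-a)^2) by (apply pow_incr; lra).
  assert (h3: / (s2*(1-a)^2) <= / (s2*(1-b)^2)).
  { apply Rinv_le_contravar. apply Rmult_lt_0_compat; [lra| apply pow_lt; lra].
    apply Rmult_le_compat_l; lra. }
  lra.
Qed.

Lemma q0 : q 0 = 0.
Proof. pose proof s2_bounds. pose proof s2_sq. unfold q, c_const; fold s2.
  field_simplify; try (split; nra). rewrite s2_pow2. unfold Rdiv. ring. Qed.

Lemma q_lin : forall s, 0 <= s <= c_const -> 2 * s <= q s.
Proof.
  intros s Hs. pose proof s2_bounds. pose proof s2_sq. pose proof q0 as Q0.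
  unfold q, c_const in *. fold s2 in *.
  assert (e1: / (2*(1-s)) - / (2*(1-0)) = s / (2*(1-s))) by (field; lra).
  assert (e2: / (2*(1-(2-s2)+0)) - / (2*(1-(2-s2)+s)) = s / (2*(s2-1)*(s2-1+s))) by (field; lra).
  assert (e3: / (s2*(1-s)^2) - / (s2*(1-0)^2) = s*(2-s) / (s2*(1-s)^2)) by (field; lra).
  assert (i1: s/2 <= s / (2*(1-s))).
  { unfold Rdiv. apply Rmult_le_compat_l; [lra|]. apply Rinv_le_contravar; nra. }
  assert (i2: s/2 <= s / (2*(s2-1)*(s2-1+s))).
  { unfold Rdiv. apply Rmult_le_compat_l; [lra|]. apply Rinv_le_contravar; nra. }
  assert (i3: s <= s*(2-s) / (s2*(1-s)^2)).
  { assert (hp: 0 < s2*(1-s)^2) by (apply Rmult_lt_0_compat; [lra| apply pow_lt; lra]).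
    apply Rmult_le_reg_r with (s2*(1-s)^2). exact hp. unfold Rdiv. rewrite Rmult_assoc, Rinv_l by lra.
    assert (h4: (1-s)^2 <= 1-s) by (simpl; nra).
    assert (h5: s2*(1-s)^2 <= 2 - s) by nra.
    rewrite Rmult_1_r. apply Rmult_le_compat_l; lra. }
  lra.
Qed.

Lemma Q_id : forall y, 0 <= y <= c_const -> 1 - f_fun y + f_fun (c_const - y) = q y * (1 - y).
Proof.
  intros y Hy. pose proof s2_bounds. pose proof s2_sq.
  unfold f_fun, q. 
  replace (1 - (c_const - y)) with (1 - c_const + y) by ring.
  replace (1 - c_const + (c_const - y)) with (1 - y) by ring.
  unfold c_const in *. fold s2 in *.
  field_simplify; try (repeat split; nra).
  rewrite !s2_pow2. unfold Rdiv. ring.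
Qed.

Lemma f0 : f_fun 0 = 1.
Proof. pose proof s2_bounds. pose proof s2_sq. unfold f_fun, c_const; fold s2.
  rewrite Rminus_0_r, ln_1, Rplus_0_r. field_simplify; try nra. rewrite s2_pow2. field. lra. Qed.
Lemma fc : f_fun c_const = 0.
Proof. pose proof s2_bounds. pose proof s2_sq. unfold f_fun.
  replace (1 - c_const + c_const) with 1 by ring. rewrite ln_1. unfold c_const; fold s2.
  field_simplify; try nra. replace (s2^3) with (2*s2) by (rewrite <- s2_sq; ring). rewrite s2_pow2. unfold Rdiv. ring. Qed.

Lemma f_deriv : forall y, 0 <= y <= c_const -> derivable_pt_lim f_fun y (- q y).
Proof.
  intros y Hy. pose proof s2_bounds. unfold c_const in *. fold s2 in *.
  apply is_derive_Reals. unfold f_fun, c_const. fold s2.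
  auto_derive.
  - repeat split; try lra. apply Rmult_integral_contrapositive_currified; lra.
  - unfold q, c_const. fold s2. field. repeat split; try lra.
Qed.

Lemma c_bounds : 0.5857 < c_const < 0.5858.
Proof. pose proof s2_bounds. unfold c_const; fold s2; lra. Qed.

Lemma f_mvt : forall a b, 0 <= a -> a < b -> b <= c_const ->
  exists xi, a < xi < b /\ f_fun b - f_fun a = - q xi * (b - a).
Proof.
  intros a b Ha Hab Hb.
  destruct (MVT_cor2 f_fun (fun y => - q y) a b Hab) as [xi [E H]].
  - intros y Hy. apply f_deriv. lra.
  - exists xi. split; auto.
Qed.

Lemma q_nonneg : forall s, 0 <= s <= c_const -> 0 <= q s.
Proof. intros s Hs. pose proof (q_lin s Hs). lra. Qed.

Lemma f_decr : forall a b, 0 <= a -> a <= b -> b <= c_const -> f_fun b <= f_fun a.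
Proof.
  intros a b Ha Hab Hb. destruct (Req_dec a b) as [->|Hne]; [lra|].
  destruct (f_mvt a b Ha ltac:(lra) Hb) as [xi [Hx E]].
  pose proof (q_nonneg xi ltac:(lra)). nra.
Qed.

Lemma f_cont : forall y, 0 <= y <= c_const -> continuity_pt f_fun y.
Proof. intros y Hy. apply derivable_continuous_pt. exists (- q y). apply f_deriv; auto. Qed.

Lemma f_inv_spec : forall x, 0 <= x <= 1 ->
  0 <= f_inv x <= c_const /\ f_fun (f_inv x) = x.
Proof.
  intros x Hx. unfold f_inv. apply epsilon_spec.
  pose proof c_bounds.
  destruct (Req_dec x 1) as [->|H1].
  { exists 0. split; [lra|apply f0]. }
  destruct (Req_dec x 0) as [->|H0].
  { exists c_const. split; [lra|apply fc]. }
  destruct (Ranalysis5.IVT_interv (fun y => x - f_fun y) 0 c_const) as [z [Hz Ez]].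
  - intros a Ha. apply continuity_pt_minus. apply continuity_pt_const. intros u v; reflexivity.
    apply f_cont; auto.
  - lra.
  - rewrite f0. lra.
  - rewrite fc. lra.
  - exists z. split; [auto|lra].
Qed.

Lemma f_range : forall y, 0 <= y <= c_const -> 0 <= f_fun y <= 1.
Proof. intros y Hy. pose proof (f_decr 0 y ltac:(lra) ltac:(lra) ltac:(lra)).
  pose proof (f_decr y c_const ltac:(lra) ltac:(lra) ltac:(lra)). rewrite f0 in *; rewrite fc in *. lra. Qed.

Lemma ln_le_xm1 : forall x, 0 < x -> ln x <= x - 1.
Proof.
  intros x Hx. destruct (Req_dec (ln x) 0) as [E|E]. rewrite E.
  apply Rle_trans with (x - 1); [|lra]. rewrite <- (exp_ln x Hx), E, exp_0. lra.
  pose proof (exp_ineq1 (ln x) E). rewrite exp_ln in H by auto. lra.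
Qed.

Lemma exp_pow : forall x n, exp x ^ n = exp (INR n * x).
Proof. induction n. simpl. rewrite Rmult_0_l, exp_0. reflexivity.
 rewrite S_INR. simpl pow. rewrite IHn. rewrite <- exp_plus. f_equal. ring. Qed.

Lemma ln_bound : - ln (1 - c_const) < 0.92.
Proof.
  pose proof s2_bounds. pose proof s2_sq.
  assert (E: 1 - c_const = / (1 + s2)). { unfold c_const; fold s2. field_simplify; try lra.
    field_simplify; [|lra]. apply Rmult_eq_reg_r with (s2+1); [|lra]. unfold Rdiv. rewrite Rmult_assoc, Rinv_l by lra. nra. }
  rewrite E, ln_Rinv by lra. rewrite Ropp_involutive.
  assert (Hx: 1.046 ^ 20 <= exp 0.046 ^ 20).
  { apply pow_incr. split; [lra|]. pose proof (exp_ineq1 0.046 ltac:(lra)). lra. }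
  rewrite exp_pow in Hx. replace (INR 20 * 0.046) with 0.92 in Hx by (simpl; lra).
  assert (2.4144 < 1.046 ^ 20) by (simpl; lra).
  rewrite <- (ln_exp 0.92). apply ln_increasing; lra.
Qed.

Definition kap : R := 0.06.
Definition Phi (y : R) : R := ln (1 - y) - ln (1 - c_const) + kap * (c_const - y).

Lemma Phi_mono : forall y y', 0 <= y' -> y' <= y -> y <= c_const -> Phi y <= Phi y'.
Proof.
  intros y y' H1 H2 H3. pose proof c_bounds. unfold Phi, kap.
  assert (ln (1 - y) <= ln (1 - y')) by (apply ln_le; lra). lra.
Qed.

Lemma Phi_nonneg : forall y, 0 <= y <= c_const -> 0 <= Phi y.
Proof.
  intros y Hy. pose proof (Phi_mono c_const y ltac:(lra) ltac:(lra) ltac:(lra)).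
  unfold Phi in *. replace (kap * (c_const - c_const)) with 0 in H by ring. lra.
Qed.

Lemma Phi_step : forall y y' nr, 0 <= y' -> y' < y -> y <= c_const ->
  (y - y')^2 <= 0.000025 -> (1 - y) / (y - y') - 1 <= nr ->
  0 < nr /\ Phi y + / nr <= Phi y' /\ 1 < nr * (1 - Phi y).
Proof.
  intros y y' nr H1 H2 H3 HD Hn. pose proof c_bounds. pose proof ln_bound.
  set (D := y - y') in *. set (a := 1 - y) in *.
  assert (HD1 : 0 < D) by (unfold D; lra).
  assert (HD2 : D <= 0.005) by nra.
  assert (Ha : 0.4142 <= a) by (unfold a; lra).
  assert (Hq : a / D - 1 = (a - D) / D) by (field; lra).
  rewrite Hq in Hn.
  assert (Hq2 : 81 <= (a - D) / D).
  { apply Rmult_le_reg_r with D; auto. unfold Rdiv. rewrite Rmult_assoc, Rinv_l by lra. lra. }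
  assert (Hnr : 0 < nr) by lra.
  split; [exact Hnr|]. split.
  - assert (Hi : / nr <= D / (a - D)).
    { replace (D / (a - D)) with (/ ((a - D) / D)) by (field; lra).
      apply Rinv_le_contravar; lra. }
    assert (Hl : D / (a + D) <= ln (1 - y') - ln (1 - y)).
    { rewrite <- ln_div by lra. 
      replace (D / (a + D)) with (- ((1 - y) / (1 - y') - 1)) by (unfold a, D; field; lra).
      rewrite <- (Ropp_involutive (ln _)). apply Ropp_le_contravar.
      rewrite <- ln_Rinv by (apply Rdiv_lt_0_compat; lra).
      replace (/ ((1 - y') / (1 - y))) with ((1 - y) / (1 - y')) by (field; lra).
      apply ln_le_xm1. apply Rdiv_lt_0_compat; lra. }
    assert (Hk : D / (a - D) <= D / (a + D) + kap * D).
    { unfold kap.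
      assert (E: D / (a - D) - D / (a + D) = 2 * D * D / ((a - D) * (a + D))) by (field; lra).
      assert (2 * D * D / ((a - D) * (a + D)) <= 0.06 * D).
      { apply Rmult_le_reg_r with ((a - D) * (a + D)). nra.
        unfold Rdiv. rewrite Rmult_assoc, Rinv_l by nra.
        assert (h1: 0.1715 <= a * a) by nra. assert (h2: D * D <= 0.000025) by nra.
        assert (h3: 2 * D <= 0.06 * ((a - D) * (a + D))) by nra.
        rewrite Rmult_1_r. replace (2 * D * D) with ((2 * D) * D) by ring.
        replace (0.06 * D * ((a - D) * (a + D))) with ((0.06 * ((a - D) * (a + D))) * D) by ring.
        apply Rmult_le_compat_r; lra. }
      lra. }
    unfold Phi. unfold a, D in *. lra.
  - assert (Hl : ln (1 - y) <= 0). { rewrite <- ln_1. apply ln_le; lra. }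
    assert (Phi y <= 0.96) by (unfold Phi, kap; lra).
    nra.
Qed.

Definition Y (k i : nat) : R := f_inv (INR (i - 1) / INR k).

Lemma Y_spec : forall k i, (1 <= k)%nat -> (1 <= i <= k + 1)%nat ->
  0 <= Y k i <= c_const /\ f_fun (Y k i) = INR (i - 1) / INR k.
Proof.
  intros k i Hk Hi. unfold Y. apply f_inv_spec.
  assert (0 < INR k) by (apply lt_0_INR; lia).
  assert (INR (i - 1) <= INR k) by (apply le_INR; lia).
  split. apply Rmult_le_pos; [apply pos_INR| left; apply Rinv_0_lt_compat; auto].
  apply Rmult_le_reg_r with (INR k); auto. unfold Rdiv. rewrite Rmult_assoc, Rinv_l by lra. lra.
Qed.

Lemma Y_step : forall k i, (1 <= k)%nat -> (1 <= i <= k)%nat ->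
  Y k (i + 1) < Y k i /\ / INR k <= q (Y k i) * (Y k i - Y k (i + 1)) /\
  (Y k i - Y k (i + 1)) ^ 2 <= 2 / INR k.
Proof.
  intros k i Hk Hi.
  destruct (Y_spec k i Hk ltac:(lia)) as [Hb Hf].
  destruct (Y_spec k (i + 1) Hk ltac:(lia)) as [Hb' Hf'].
  assert (Hkp : 0 < INR k) by (apply lt_0_INR; lia).
  replace (i + 1 - 1)%nat with i in Hf' by lia.
  assert (Ei : INR i = INR (i - 1) + 1).
  { replace i with (S (i - 1)) at 1 by lia. rewrite S_INR. reflexivity. }
  assert (Hdiff : f_fun (Y k (i + 1)) - f_fun (Y k i) = / INR k).
  { rewrite Hf, Hf', Ei. field. lra. }
  set (b := Y k i) in *. set (a := Y k (i + 1)) in *.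
  assert (Hlt : a < b).
  { destruct (Rlt_or_le a b) as [h|h]; auto.
    pose proof (f_decr b a ltac:(lra) h ltac:(lra)).
    pose proof (Rinv_0_lt_compat _ Hkp). lra. }
  split; [exact Hlt|]. split.
  - destruct (f_mvt a b ltac:(lra) Hlt ltac:(lra)) as [xi [Hx E]].
    pose proof (q_mono xi b ltac:(lra) ltac:(lra) ltac:(lra)). nra.
  - set (m := (a + b) / 2).
    destruct (f_mvt m b ltac:(unfold m; lra) ltac:(unfold m; lra) ltac:(lra)) as [xi [Hx E]].
    pose proof (f_decr a m ltac:(lra) ltac:(unfold m; lra) ltac:(unfold m; lra)).
    pose proof (q_lin xi ltac:(unfold m in *; lra)).
    assert (Hq : b - a <= q xi) by (unfold m in *; lra).
    assert ((b - a) * (b - m) <= / INR k) by (apply Rle_trans with (q xi * (b - m)); [apply Rmult_le_compat_r; unfold m; lra | lra]).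
    unfold m in *. 
    assert (Hr : 2 / INR k = 2 * / INR k) by (unfold Rdiv; ring). rewrite Hr. simpl. lra.
Qed.

Lemma hcount_bounds : forall k i, (1 <= k)%nat -> (1 <= i <= k)%nat ->
  INR k * f_fun (c_const - Y k i) - 1 < INR (hcount k i) /\ (hcount k i <= k)%nat.
Proof.
  intros k i Hk Hi.
  destruct (Y_spec k i Hk ltac:(lia)) as [Hb Hf].
  assert (Hkp : 0 < INR k) by (apply lt_0_INR; lia).
  destruct (f_range (c_const - Y k i) ltac:(lra)) as [F0 F1].
  unfold hcount, floor_nat, h_fun. fold (Y k i).
  set (r := INR k * f_fun (c_const - Y k i)).
  assert (Hr : 0 <= r <= INR k) by (unfold r; split; nra).
  destruct (base_Int_part r) as [B1 B2].
  assert (Hz : (0 <= Int_part r)%Z).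
  { assert (-1 < IZR (Int_part r)) by lra.
    destruct (Z_lt_le_dec (Int_part r) 0) as [h|h]; auto. exfalso.
    assert (Hm1: IZR (Int_part r) <= IZR (-1)) by (apply IZR_le; lia).
    replace (IZR (-1)) with (-1) in Hm1 by reflexivity. lra. }
  rewrite INR_IZR_INZ, Z2Nat.id by auto. split; [lra|].
  apply INR_le. rewrite INR_IZR_INZ, Z2Nat.id by auto. lra.
Qed.

Definition Kbig : nat := Nat.pow 2 17.

Lemma index_fact : forall k i n, (Kbig <= k)%nat -> (1 <= i <= k)%nat ->
  (k - i + 1 + hcount k i <= n)%nat ->
  0 < INR n /\ Phi (Y k i) + / INR n <= Phi (Y k (i + 1)) /\ 1 < INR n * (1 - Phi (Y k i)).
Proof.
  intros k i n HK Hi Hn.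
  assert (Hk1 : (1 <= k)%nat).
  { unfold Kbig in HK. assert (1 <= Nat.pow 2 17)%nat by (change 1%nat with (Nat.pow 2 0); apply Nat.pow_le_mono_r; lia). lia. }
  assert (HKR : 131072 <= INR k).
  { apply le_INR in HK. unfold Kbig in HK. rewrite pow_INR in HK. simpl in HK. lra. }
  destruct (Y_spec k i Hk1 ltac:(lia)) as [Hb Hf].
  destruct (Y_spec k (i + 1) Hk1 ltac:(lia)) as [Hb' Hf'].
  destruct (Y_step k i Hk1 Hi) as [Hlt [Hq HD]].
  destruct (hcount_bounds k i Hk1 Hi) as [Hh _].
  pose proof (Q_id (Y k i) Hb) as EQ.
  assert (Hkp : 0 < INR k) by lra.
  apply le_INR in Hn. rewrite !plus_INR, minus_INR in Hn by lia.
  assert (Ei : INR i = INR (i - 1) + 1).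
  { replace i with (S (i - 1)) at 1 by lia. rewrite S_INR. reflexivity. }
  assert (Hfk : INR k * f_fun (Y k i) = INR (i - 1)) by (rewrite Hf; field; lra).
  set (y := Y k i) in *. set (y' := Y k (i + 1)) in *.
  assert (HD2 : (y - y') ^ 2 <= 0.000025).
  { apply Rle_trans with (2 / INR k); auto. apply Rmult_le_reg_r with (INR k); auto.
    unfold Rdiv. rewrite Rmult_assoc, Rinv_l by lra. lra. }
  apply Phi_step; try lra.
  assert (Hn2 : INR k * (q y * (1 - y)) - 1 <= INR n).
  { rewrite <- EQ. replace (INR k * (1 - f_fun y + f_fun (c_const - y))) with (INR k - INR k * f_fun y + INR k * f_fun (c_const - y)) by ring. change (INR 1) with 1 in Hn. lra. }
  assert (Hq2 : (1 - y) / (y - y') <= INR k * (q y * (1 - y))).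
  { apply Rmult_le_reg_r with (y - y'); [lra|]. unfold Rdiv. rewrite Rmult_assoc, Rinv_l by lra.
    rewrite Rmult_1_r.
    assert (1 <= INR k * (q y * (y - y'))).
    { apply Rmult_le_reg_l with (/ INR k). apply Rinv_0_lt_compat; lra.
      rewrite <- Rmult_assoc, Rinv_l by lra. lra. }
    pose proof c_bounds. nra. }
  lra.
Qed.

Import ListNotations.

Lemma sumR_nonneg : forall (l : list gvert) (g : gvert -> R),
  (forall v, In v l -> 0 <= g v) -> 0 <= sumR (map g l).
Proof.
  induction l as [|a l IH]; intros g H; simpl. lra.
  pose proof (H a (or_introl eq_refl)). pose proof (IH g (fun v hv => H v (or_intror hv))). lra.
Qed.

Lemma Rmax_abs : forall a z, Rmax a z = (a + z + Rabs (z - a)) / 2.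
Proof. intros a z. unfold Rmax. destruct (Rle_dec a z).
  rewrite Rabs_right by lra. field. rewrite Rabs_left by lra. field. Qed.

Lemma F_cont : forall (L : gvert -> R) (N : list gvert),
  continuity (fun z => sumR (map (fun v => Rmax (L v) z - L v) N)).
Proof.
  intros L N. induction N as [|a N IH]; simpl.
  - apply continuity_const. intros x y; reflexivity.
  - apply (continuity_plus (fun z => Rmax (L a) z - L a) (fun z => sumR (map (fun v => Rmax (L v) z - L v) N))); auto.
    apply (continuity_minus (fun z => Rmax (L a) z) (fun _ => L a)).
    + assert (E: (fun z => Rmax (L a) z) = (fun z => (L a + z + Rabs (z - L a)) / 2)).
      { apply functional_extensionality. intro z. apply Rmax_abs. }
      rewrite E. unfold Rdiv.
      apply (continuity_mult (fun z => L a + z + Rabs (z - L a)) (fun _ => / 2)).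
      * apply (continuity_plus (fun z => L a + z) (fun z => Rabs (z - L a))).
        -- apply (continuity_plus (fun _ => L a) (fun z => z)). apply continuity_const; intros x y; reflexivity.
           apply derivable_continuous, derivable_id.
        -- apply (continuity_comp (fun z => z - L a) Rabs). 
           apply (continuity_minus (fun z => z) (fun _ => L a)). apply derivable_continuous, derivable_id.
           apply continuity_const; intros x y; reflexivity.
           apply Rcontinuity_abs.
      * apply continuity_const; intros x y; reflexivity.
    + apply continuity_const; intros x y; reflexivity.
Qed.

Lemma F_zero : forall (L : gvert -> R) N, (forall w, 0 <= L w) ->
  sumR (map (fun v => Rmax (L v) 0 - L v) N) = 0.
Proof. intros L N H. induction N as [|a N IH]; simpl; auto.
  rewrite IH. unfold Rmax. destruct (Rle_dec (L a) 0); pose proof (H a); lra. Qed.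

Lemma F_one : forall (L : gvert -> R) N, (forall w, L w <= 1) ->
  sumR (map (fun v => Rmax (L v) 1 - L v) N) = sumR (map (fun v => 1 - L v) N).
Proof. intros L N H. induction N as [|a N IH]; simpl; auto.
  rewrite IH. unfold Rmax. destruct (Rle_dec (L a) 1); pose proof (H a); lra. Qed.

Lemma step_exists : forall (N : list gvert) u (L : gvert -> R),
  (forall w, 0 <= L w <= 1) -> ~ In u N ->
  exists L1, wf_step N u L L1.
Proof.
  intros N u L HL Hu.
  set (F := fun z => sumR (map (fun v => Rmax (L v) z - L v) N)).
  set (L1 := fun lvl => fun w => if in_dec gvert_eqdec w N then Rmax (L w) lvl
                         else if gvert_eqdec w u then L u + F lvl else L w).
  assert (HS : forall lvl, sumR (map (fun v => L1 lvl v - L v) N) = F lvl).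
  { intro lvl. unfold F. f_equal. apply map_ext_in. intros v Hv. unfold L1.
    destruct (in_dec gvert_eqdec v N); [reflexivity|contradiction]. }
  assert (Hin : forall lvl v, In v N -> L1 lvl v = Rmax (L v) lvl).
  { intros lvl v Hv. unfold L1. destruct (in_dec gvert_eqdec v N); [reflexivity|contradiction]. }
  assert (Hout : forall lvl w, w <> u -> ~ In w N -> L1 lvl w = L w).
  { intros lvl w H1 H2. unfold L1. destruct (in_dec gvert_eqdec w N); [contradiction|].
    destruct (gvert_eqdec w u); [contradiction|reflexivity]. }
  assert (Hu1 : forall lvl, L1 lvl u = L u + F lvl).
  { intro lvl. unfold L1. destruct (in_dec gvert_eqdec u N); [contradiction|].
    destruct (gvert_eqdec u u); [reflexivity|contradiction]. }
  assert (HF0 : F 0 = 0) by (apply F_zero; intro w; apply HL).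
  destruct (Rle_dec (L u + F 1) 1) as [Hc|Hc].
  - exists (L1 1). exists 1. repeat split; try lra.
    + intros v Hv. apply Hin; auto.
    + intros w H1 H2. apply Hout; auto.
    + rewrite HS. apply Hu1.
    + rewrite Hu1. lra.
    + right. intros v Hv. rewrite Hin by auto. unfold Rmax. destruct (Rle_dec (L v) 1); auto.
      pose proof (HL v). lra.
  - destruct (Req_dec (L u) 1) as [Hu1'|Hu1'].
    + exists (L1 0). exists 0. repeat split; try lra.
      * intros v Hv. apply Hin; auto.
      * intros w H1 H2. apply Hout; auto.
      * rewrite HS. apply Hu1.
      * rewrite Hu1, HF0. lra.
      * left. rewrite Hu1, HF0. lra.
    + destruct (IVT (fun z => L u + F z - 1) 0 1) as [z [Hz Ez]].
      * apply (continuity_minus (fun z => L u + F z) (fun _ => 1)).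
        apply (continuity_plus (fun _ => L u) F). apply continuity_const; intros x y; reflexivity.
        apply F_cont. apply continuity_const; intros x y; reflexivity.
      * lra.
      * rewrite HF0. pose proof (HL u). lra.
      * lra.
      * exists (L1 z). exists z. repeat split; try lra.
        -- intros v Hv. apply Hin; auto.
        -- intros w H1 H2. apply Hout; auto.
        -- rewrite HS. apply Hu1.
        -- rewrite Hu1. lra.
        -- left. rewrite Hu1. lra.
Qed.

Lemma step_range : forall N u (L L1 : gvert -> R),
  (forall w, 0 <= L w <= 1) -> wf_step N u L L1 ->
  forall w, 0 <= L1 w <= 1 /\ L w <= L1 w.
Proof.
  intros N u L L1 HL [lvl [Hl [HN [Ho [Hu [Hu1 _]]]]]] w.
  assert (Hs : 0 <= sumR (map (fun v => L1 v - L v) N)).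
  { apply sumR_nonneg. intros v Hv. rewrite HN by auto. unfold Rmax.
    destruct (Rle_dec (L v) lvl); lra. }
  destruct (in_dec gvert_eqdec w N) as [Hw|Hw].
  - rewrite HN by auto. pose proof (HL w). unfold Rmax. destruct (Rle_dec (L w) lvl); lra.
  - destruct (gvert_eqdec w u) as [->|Hwu].
    + pose proof (HL u). lra.
    + rewrite Ho by auto. pose proof (HL w). lra.
Qed.

Definition cnt {A} (T : A -> bool) (l : list A) : nat := length (filter T l).

Lemma cnt_sum : forall (l : list gvert) (P T : gvert -> bool) (g : gvert -> R) (m0 : R),
  (forall v, In v l -> T v = true -> P v = true) ->
  (forall v, In v l -> P v = true -> 0 <= g v) ->
  (forall v, In v l -> T v = true -> m0 <= g v) ->
  INR (cnt T l) * m0 <= sumR (map g (filter P l)).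
Proof.
  unfold cnt. induction l as [|a l IH]; intros P T g m0 H1 H2 H3. simpl. lra.
  assert (IH' := IH P T g m0 (fun v hv => H1 v (or_intror hv)) (fun v hv => H2 v (or_intror hv))
                   (fun v hv => H3 v (or_intror hv))).
  destruct (T a) eqn:Ta.
  - cbn [filter]. rewrite Ta, (H1 a (or_introl eq_refl) Ta). cbn [length map sumR fold_right].
    rewrite S_INR.
    pose proof (H3 a (or_introl eq_refl) Ta). unfold sumR in *. rewrite Rmult_plus_distr_r, Rmult_1_l. lra.
  - cbn [filter]. rewrite Ta. unfold sumR in *. destruct (P a) eqn:Pa; cbn [map fold_right]; auto.
    pose proof (H2 a (or_introl eq_refl) Pa). lra.
Qed.

Lemma cnt_app : forall {A} (T : A -> bool) l1 l2, cnt T (l1 ++ l2) = (cnt T l1 + cnt T l2)%nat.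
Proof. intros. unfold cnt. rewrite filter_app, length_app. reflexivity. Qed.

Lemma cnt_flat_map : forall {A B} (T : B -> bool) (g : A -> list B) l x,
  In x l -> (cnt T (g x) <= cnt T (flat_map g l))%nat.
Proof.
  intros A B T g l x. induction l as [|a l IH]; simpl; intros H. contradiction.
  rewrite cnt_app. destruct H as [->|H]. lia. specialize (IH H). lia.
Qed.

Lemma cnt_map : forall {A B} (T : B -> bool) (g : A -> B) l, cnt T (map g l) = cnt (fun x => T (g x)) l.
Proof. intros. unfold cnt. induction l as [|a l IH]; simpl; auto. destruct (T (g a)); simpl; auto. Qed.

Lemma cnt_le_seq : forall h k, cnt (fun j => j <=? h) (seq 1 k) = Nat.min h k.
Proof.
  intros h k. induction k as [|k IH]. unfold cnt; cbn [seq filter length]. lia.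
  rewrite seq_S, cnt_app, IH. unfold cnt; cbn [filter].
  destruct (1 + k <=? h) eqn:E; cbn [length]; [apply Nat.leb_le in E|apply Nat.leb_gt in E]; lia.
Qed.

Lemma cnt_ge_seq : forall i k, (1 <= i)%nat -> cnt (fun j => i <=? j) (seq 1 k) = (k + 1 - i)%nat.
Proof.
  intros i k Hi. induction k as [|k IH]. unfold cnt; cbn [seq filter length]. lia.
  rewrite seq_S, cnt_app, IH. unfold cnt; cbn [filter].
  destruct (i <=? 1 + k) eqn:E; cbn [length]; [apply Nat.leb_le in E|apply Nat.leb_gt in E]; lia.
Qed.

Definition layer (w : gvert) : nat := match w with GV t _ => t | GU t _ => (t - 1)%nat end.

Definition Tpred (k t i : nat) (v : gvert) : bool :=
  match v with
  | GV t' j => (t' =? t)%nat && (i <=? j)%nat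
  | GU t' j => (t' =? t + 1)%nat && (j <=? hcount k i)%nat
  end.

Lemma In_G_verts : forall k m v, In v (G_verts k m) ->
  match v with GU t j | GV t j => (1 <= t <= m)%nat /\ (1 <= j <= k)%nat end.
Proof.
  intros k m v H. unfold G_verts in H. apply in_app_or in H.
  destruct H as [H|H]; apply in_flat_map in H; destruct H as [t [Ht H]];
  apply in_map_iff in H; destruct H as [j [<- Hj]]; apply in_seq in Ht; apply in_seq in Hj; lia.
Qed.

Lemma adj_layer : forall k m t i v, G_adj k m (GU t i) v = true -> (layer v <= t)%nat.
Proof.
  intros k m t i v H. unfold G_adj in H. apply orb_true_iff in H.
  destruct v as [t' j|t' j]; simpl in H; destruct H as [H|H]; try discriminate;
  repeat (apply andb_true_iff in H; destruct H as [H ?]); simpl;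
  repeat match goal with h : (_ =? _)%nat = true |- _ => apply Nat.eqb_eq in h end; lia.
Qed.

Lemma adj_irrefl : forall k m t i, G_adj k m (GU t i) (GU t i) = false.
Proof.
  intros. unfold G_adj. simpl. replace (t =? t + 1)%nat with false. 
  rewrite !andb_false_r, !andb_false_l. reflexivity. 
  symmetry. apply Nat.eqb_neq. lia.
Qed.

Lemma T_adj : forall k m t i v, In v (G_verts k m) -> Tpred k t i v = true ->
  (1 <= t)%nat -> (t + 1 <= m)%nat -> (1 <= i <= k)%nat ->
  G_adj k m (GU t i) v = true /\ layer v = t /\ (forall t' j, v = GU t' j -> (t < t')%nat).
Proof.
  intros k m t i v Hv HT Ht Htm Hi. apply In_G_verts in Hv.
  destruct v as [t' j|t' j]; simpl in HT; apply andb_true_iff in HT; destruct HT as [H1 H2];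
  apply Nat.eqb_eq in H1; apply Nat.leb_le in H2; subst t'.
  - split; [|split; [simpl; lia|]].
    + unfold G_adj. apply orb_true_iff. left. simpl. unfold idx_ok.
      repeat (apply andb_true_iff; split); try apply Nat.leb_le; try apply Nat.eqb_eq; lia.
    + intros t'' j' E. injection E; intros; lia.
  - split; [|split; [reflexivity|discriminate]].
    unfold G_adj. apply orb_true_iff. left. simpl. unfold idx_ok.
    repeat (apply andb_true_iff; split); try apply Nat.leb_le; try apply Nat.eqb_eq; lia.
Qed.

Lemma cnt_T : forall k m t i, (1 <= t)%nat -> (t + 1 <= m)%nat -> (1 <= i <= k)%nat ->
  (k + 1 - i + Nat.min (hcount k i) k <= cnt (Tpred k t i) (G_verts k m))%nat.
Proof.
  intros k m t i Ht Htm Hi. unfold G_verts. rewrite cnt_app.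
  assert (A : (Nat.min (hcount k i) k <= cnt (Tpred k t i) (flat_map (fun t0 => map (GU t0) (seq 1 k)) (seq 1 m)))%nat).
  { eapply Nat.le_trans; [|apply (cnt_flat_map _ _ _ (t + 1)%nat)].
    - cbv beta. rewrite cnt_map. simpl. rewrite ?Nat.eqb_refl. simpl. rewrite cnt_le_seq. lia.
    - apply in_seq. lia. }
  assert (B : (k + 1 - i <= cnt (Tpred k t i) (flat_map (fun t0 => map (GV t0) (seq 1 k)) (seq 1 m)))%nat).
  { eapply Nat.le_trans; [|apply (cnt_flat_map _ _ _ t)].
    - cbv beta. rewrite cnt_map. simpl. rewrite ?Nat.eqb_refl. simpl. rewrite cnt_ge_seq; lia.
    - apply in_seq. lia. }
  lia.
Qed.

Definition Inv (k t i : nat) (L : gvert -> R) (done : list gvert) : Prop :=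
  (forall w, 0 <= L w <= 1) /\
  (forall w, layer w = t -> L w <= Phi (Y k i)) /\
  (forall w, (t < layer w)%nat -> L w = 0) /\
  (forall w, In w done -> exists t' j, w = GU t' j /\ (t' <= t)%nat).

Lemma inb_In : forall (v : gvert) l, inb gvert_eqdec v l = true -> In v l.
Proof.
  intros v l. induction l as [|a l IH]; simpl. discriminate.
  intros H. apply orb_true_iff in H. destruct H as [H|H].
  - destruct (gvert_eqdec v a); [left; auto|discriminate].
  - right; auto.
Qed.

Lemma Nbrs_notin : forall k m t i done,
  ~ In (GU t i) (open_nbrs gvert_eqdec (G_verts k m) (G_adj k m) done (GU t i)).
Proof.
  intros k m t i done H. unfold open_nbrs in H. apply filter_In in H. destruct H as [_ H].
  rewrite adj_irrefl in H. discriminate.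
Qed.

Lemma step_graph : forall k m t i L L1 done, (Kbig <= k)%nat -> (1 <= i <= k)%nat ->
  (1 <= t)%nat -> (t + 1 <= m)%nat -> Inv k t i L done ->
  wf_step (open_nbrs gvert_eqdec (G_verts k m) (G_adj k m) done (GU t i)) (GU t i) L L1 ->
  Inv k t (i + 1) L1 (GU t i :: done) /\ L1 (GU t i) = 1.
Proof.
  intros k m t i L L1 done HK Hi Ht Htm [Ia [Ib [Ic Id]]] Hstep.
  pose proof (step_range _ _ _ _ Ia Hstep) as Hrange.
  set (N := open_nbrs gvert_eqdec (G_verts k m) (G_adj k m) done (GU t i)) in *.
  destruct Hstep as [lvl [Hl [HN [Ho [Hu [Hu1 Hdisj]]]]]].
  set (n := cnt (Tpred k t i) (G_verts k m)).
  assert (Hn : (k - i + 1 + hcount k i <= n)%nat).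
  { assert (Hk1 : (1 <= k)%nat).
    { unfold Kbig in HK. assert (1 <= Nat.pow 2 17)%nat by (change 1%nat with (Nat.pow 2 0); apply Nat.pow_le_mono_r; lia). lia. }
    pose proof (cnt_T k m t i Ht Htm Hi). destruct (hcount_bounds k i Hk1 Hi) as [_ Hh].
    unfold n. lia. }
  destruct (index_fact k i n HK Hi Hn) as [Hnpos [Hphi Hfire]].
  set (P := fun v => G_adj k m (GU t i) v && negb (inb gvert_eqdec v done)).
  assert (HNeq : N = filter P (G_verts k m)) by reflexivity.
  assert (HTP : forall v, In v (G_verts k m) -> Tpred k t i v = true -> P v = true).
  { intros v Hv HT. destruct (T_adj k m t i v Hv HT Ht Htm Hi) as [Ha [_ Hl2]].
    unfold P. rewrite Ha. simpl. destruct (inb gvert_eqdec v done) eqn:E; auto.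
    apply inb_In, Id in E. destruct E as [t' [j [-> Hle]]]. specialize (Hl2 t' j eq_refl). lia. }
  assert (HinN : forall v, In v N -> G_adj k m (GU t i) v = true).
  { intros v Hv. rewrite HNeq in Hv. apply filter_In in Hv. destruct Hv as [_ Hv].
    unfold P in Hv. apply andb_true_iff in Hv. tauto. }
  assert (Hsum : sumR (map (fun v => L1 v - L v) N) <= 1).
  { pose proof (Ia (GU t i)). lra. }
  assert (Hphi' : Phi (Y k i) <= Phi (Y k (i + 1))).
  { pose proof (Rinv_0_lt_compat _ Hnpos). lra. }
  assert (Hlvl : lvl <= Phi (Y k (i + 1))).
  { destruct (Rle_dec lvl (Phi (Y k i))) as [h|h]; [lra|].
    assert (Hc : INR n * (lvl - Phi (Y k i)) <= sumR (map (fun v => L1 v - L v) N)).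
    { rewrite HNeq. apply cnt_sum.
      - exact HTP.
      - intros v Hv Pv. assert (In v N) by (rewrite HNeq; apply filter_In; auto).
        destruct (Hrange v). lra.
      - intros v Hv HT. assert (In v N) by (rewrite HNeq; apply filter_In; auto).
        rewrite HN by auto. destruct (T_adj k m t i v Hv HT Ht Htm Hi) as [_ [Hly _]].
        pose proof (Ib v Hly). pose proof (Rmax_r (L v) lvl). lra. }
    assert (lvl - Phi (Y k i) <= / INR n).
    { apply Rmult_le_reg_l with (INR n); auto. rewrite Rinv_r by lra. lra. }
    lra. }
  split.
  - split; [intro w; apply Hrange|]. split; [|split].
    + intros w Hw. destruct (in_dec gvert_eqdec w N) as [HwN|HwN].
      * rewrite HN by auto. pose proof (Ib w Hw). apply Rmax_lub; lra.
      * destruct (gvert_eqdec w (GU t i)) as [->|Hne].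
        -- simpl in Hw. lia.
        -- rewrite Ho by auto. pose proof (Ib w Hw). lra.
    + intros w Hw. destruct (in_dec gvert_eqdec w N) as [HwN|HwN].
      * apply HinN, adj_layer in HwN. lia.
      * destruct (gvert_eqdec w (GU t i)) as [->|Hne].
        -- simpl in Hw. lia.
        -- rewrite Ho by auto. apply Ic; auto.
    + intros w [<-|Hw]. exists t, i. split; auto. destruct (Id w Hw) as [t' [j [E H]]].
      exists t', j. split; auto.
  - destruct Hdisj as [H1|Hall]; auto. exfalso.
    assert (Hc : INR n * (1 - Phi (Y k i)) <= sumR (map (fun v => L1 v - L v) N)).
    { rewrite HNeq. apply cnt_sum.
      - exact HTP.
      - intros v Hv Pv. assert (In v N) by (rewrite HNeq; apply filter_In; auto).
        destruct (Hrange v). lra.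
      - intros v Hv HT. assert (In v N) by (rewrite HNeq; apply filter_In; auto).
        rewrite Hall by auto. destruct (T_adj k m t i v Hv HT Ht Htm Hi) as [_ [Hly _]].
        pose proof (Ib v Hly). lra. }
    pose proof (Ia (GU t i)). lra.
Qed.

Lemma run_app : forall (verts : list gvert) adj l1 l2 done L L2,
  wf_run gvert_eqdec verts adj done L (l1 ++ l2) L2 <->
  exists L1, wf_run gvert_eqdec verts adj done L l1 L1 /\
             wf_run gvert_eqdec verts adj (rev l1 ++ done) L1 l2 L2.
Proof.
  intros verts adj l1. induction l1 as [|u l1 IH]; intros l2 done L L2; simpl; split.
  - intros H. exists L. split; [constructor|exact H].
  - intros [L1 [H1 H2]]. inversion H1; subst. exact H2.
  - intros H. inversion H as [| d0 L0' u0 r0 L10 L20 Hs Hr]; subst. apply IH in Hr. destruct Hr as [L3 [H3 H4]].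
    exists L3. split. econstructor; eauto. rewrite <- app_assoc. exact H4.
  - intros [L1 [H1 H2]]. inversion H1 as [| d0 L0' u0 r0 L10 L20 Hs Hr]; subst. econstructor; eauto. apply IH.
    exists L1. split; auto. rewrite <- app_assoc in H2. exact H2.
Qed.

Definition Ublock (k : nat) (ts : list nat) : list gvert := flat_map (fun t' => map (GU t') (seq 1 k)) ts.
Definition pref (k t i : nat) : list gvert := Ublock k (seq 1 (t - 1)) ++ map (GU t) (seq 1 (i - 1)).

Definition L0 : gvert -> R := fun _ => 0.

Definition Reach (k m t i : nat) : Prop :=
  (exists L, wf_run gvert_eqdec (G_verts k m) (G_adj k m) [] L0 (pref k t i) L) /\
  (forall L, wf_run gvert_eqdec (G_verts k m) (G_adj k m) [] L0 (pref k t i) L ->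
             Inv k t i L (rev (pref k t i))).

Lemma pref_S : forall k t i, (1 <= i)%nat -> pref k t (i + 1) = pref k t i ++ [GU t i].
Proof.
  intros k t i Hi. unfold pref. rewrite <- app_assoc. f_equal.
  replace (i + 1 - 1)%nat with (S (i - 1)) by lia. rewrite seq_S, map_app. simpl.
  replace (S (i - 1))%nat with i by lia. reflexivity.
Qed.

Lemma pref_layer : forall k t, (1 <= t)%nat -> pref k (t + 1) 1 = pref k t (k + 1).
Proof.
  intros k t Ht. unfold pref, Ublock. simpl. rewrite app_nil_r.
  replace (t + 1 - 1)%nat with (S (t - 1)) by lia. rewrite seq_S, flat_map_app. simpl.
  replace (S (t - 1))%nat with t by lia. rewrite ?app_nil_r.
  replace (k + 1 - 1)%nat with k by lia. reflexivity.
Qed.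

Lemma reach_step : forall k m t i, (Kbig <= k)%nat -> (1 <= i <= k)%nat ->
  (1 <= t)%nat -> (t + 1 <= m)%nat -> Reach k m t i -> Reach k m t (i + 1).
Proof.
  intros k m t i HK Hi Ht Htm [[L HL] Hall].
  unfold Reach. rewrite pref_S by lia. split.
  - destruct (Hall L HL) as [Ia _].
    destruct (step_exists (open_nbrs gvert_eqdec (G_verts k m) (G_adj k m) (rev (pref k t i) ++ []) (GU t i))
                (GU t i) L Ia (Nbrs_notin _ _ _ _ _)) as [L1 H1].
    exists L1. apply run_app. exists L. split; auto. econstructor; eauto. constructor.
  - intros L2 H. apply run_app in H. destruct H as [L1 [H1 H2]].
    inversion H2 as [| d0 L0' u0 r0 L10 L20 Hs Hr]; subst. inversion Hr; subst.
    rewrite app_nil_r in Hs.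
    destruct (step_graph k m t i L1 L2 (rev (pref k t i)) HK Hi Ht Htm (Hall L1 H1) Hs) as [I _].
    rewrite rev_app_distr. simpl. exact I.
Qed.

Lemma reach_layer : forall k m t, (Kbig <= k)%nat -> (1 <= t)%nat -> (t + 1 <= m)%nat ->
  Reach k m t 1 -> forall i, (1 <= i <= k + 1)%nat -> Reach k m t i.
Proof.
  intros k m t HK Ht Htm H1 i Hi. induction i as [|i IH]. lia.
  destruct (Nat.eq_dec i 0) as [->|Hne]. exact H1.
  replace (S i) with (i + 1)%nat by lia. apply reach_step; auto; try lia. apply IH. lia.
Qed.

Lemma Inv_next : forall k t L done, (1 <= k)%nat -> Inv k t (k + 1) L done -> Inv k (t + 1) 1 L done.
Proof.
  intros k t L done Hk [Ia [Ib [Ic Id]]]. split; [auto|]. split; [|split].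
  - intros w Hw. rewrite (Ic w ltac:(lia)). apply Phi_nonneg. apply (Y_spec k 1 Hk). lia.
  - intros w Hw. apply Ic. lia.
  - intros w Hw. destruct (Id w Hw) as [t' [j [E H]]]. exists t', j. split; auto. lia.
Qed.

Lemma reach_all : forall k m, (Kbig <= k)%nat -> forall t, (1 <= t)%nat -> (t + 1 <= m)%nat ->
  forall i, (1 <= i <= k + 1)%nat -> Reach k m t i.
Proof.
  intros k m HK.
  assert (Hk1 : (1 <= k)%nat).
  { unfold Kbig in HK. assert (1 <= Nat.pow 2 17)%nat by (change 1%nat with (Nat.pow 2 0); apply Nat.pow_le_mono_r; lia). lia. }
  intros t. induction t as [|t IH]; intros Ht Htm i Hi. lia.
  apply reach_layer; auto; try lia.
  destruct (Nat.eq_dec t 0) as [->|Hne].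
  - unfold Reach, pref, Ublock. simpl. split.
    + exists L0. constructor.
    + intros L H. inversion H; subst. unfold Inv. split; [|split; [|split]].
      * intros w. unfold L0. lra.
      * intros w _. unfold L0. apply Phi_nonneg. apply (Y_spec k 1 Hk1). lia.
      * intros w _. reflexivity.
      * intros w [].
  - assert (R : Reach k m t (k + 1)) by (apply IH; lia).
    replace (S t) with (t + 1)%nat by lia. destruct R as [[L HL] Hall]. unfold Reach.
    rewrite pref_layer by lia. split.
    + exists L. auto.
    + intros L' H. apply Inv_next; auto.
Qed.

Lemma prefix_unique : forall (x : gvert) a' b' a b, a ++ x :: b = a' ++ x :: b' ->
  ~ In x a' -> ~ In x b' -> a = a'.
Proof.
  intros x a'. induction a' as [|y a' IH]; intros b' a b E H1 H2.
  - destruct a as [|z a]; auto. simpl in E. injection E as -> E.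
    exfalso. apply H2. rewrite <- E. apply in_or_app. right. left. reflexivity.
  - destruct a as [|z a]; simpl in E; injection E as E1 E2.
    + exfalso. apply H1. left. auto.
    + subst z. f_equal. apply (IH b' a b E2); auto. intro h; apply H1; right; auto.
Qed.

Definition Vblock (k m : nat) : list gvert := flat_map (fun t => map (GV t) (seq 1 k)) (seq 1 m).

Lemma seq_split : forall s n x, (s <= x < s + n)%nat ->
  seq s n = seq s (x - s) ++ x :: seq (S x) (s + n - S x).
Proof.
  intros s n x H. assert (E : n = ((x - s) + S (s + n - S x))%nat) by lia.
  rewrite E at 1. rewrite seq_app. f_equal. replace (s + (x - s))%nat with x by lia. reflexivity.
Qed.

Lemma deadlines_split : forall k m t i, (1 <= t <= m)%nat -> (1 <= i <= k)%nat ->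
  G_deadlines k m = pref k t i ++ GU t i ::
    (map (GU t) (seq (S i) (k - i)) ++ Ublock k (seq (S t) (m - t)) ++ Vblock k m).
Proof.
  intros k m t i Ht Hi. unfold G_deadlines, pref, Vblock, Ublock.
  rewrite (seq_split 1 m t) at 1 by lia. replace (1 + m - S t)%nat with (m - t)%nat by lia.
  rewrite flat_map_app. simpl.
  rewrite (seq_split 1 k i) at 1 by lia. replace (1 + k - S i)%nat with (k - i)%nat by lia.
  rewrite map_app. simpl. rewrite <- !app_assoc. reflexivity.
Qed.

Lemma notin_pref : forall k t i, ~ In (GU t i) (pref k t i).
Proof.
  intros k t i H. unfold pref, Ublock in H. apply in_app_or in H. destruct H as [H|H].
  - apply in_flat_map in H. destruct H as [t' [Ht' H]]. apply in_map_iff in H.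
    destruct H as [j [E _]]. injection E; intros; subst. apply in_seq in Ht'. lia.
  - apply in_map_iff in H. destruct H as [j [E Hj]]. injection E; intros; subst.
    apply in_seq in Hj. lia.
Qed.

Lemma notin_rest : forall k m t i,
  ~ In (GU t i) (map (GU t) (seq (S i) (k - i)) ++ Ublock k (seq (S t) (m - t)) ++ Vblock k m).
Proof.
  intros k m t i H. unfold Ublock, Vblock in H. apply in_app_or in H. destruct H as [H|H].
  - apply in_map_iff in H. destruct H as [j [E Hj]]. injection E; intros; subst.
    apply in_seq in Hj. lia.
  - apply in_app_or in H. destruct H as [H|H]; apply in_flat_map in H; destruct H as [t' [Ht' H]];
    apply in_map_iff in H; destruct H as [j [E _]]; try discriminate.
    injection E; intros; subst. apply in_seq in Ht'. lia.
Qed.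

Theorem corollary3p4 :
  exists K : nat, forall k m : nat, (K <= k)%nat ->
  forall t i : nat, (1 <= t <= m - 1)%nat -> (1 <= i <= k)%nat ->
  forall pre post : list gvert,
    G_deadlines k m = pre ++ GU t i :: post ->
    (exists L, wf_run gvert_eqdec (G_verts k m) (G_adj k m) []
                 (fun _ => 0) (pre ++ [GU t i]) L) /\
    (forall L, wf_run gvert_eqdec (G_verts k m) (G_adj k m) []
                 (fun _ => 0) (pre ++ [GU t i]) L ->
               L (GU t i) = 1).
Proof.
  exists Kbig. intros k m HK t i Ht Hi pre post Hdl.
  assert (Hpre : pre = pref k t i).
  { rewrite (deadlines_split k m t i ltac:(lia) Hi) in Hdl.
    symmetry in Hdl. eapply prefix_unique; eauto. apply notin_pref. apply notin_rest. }
  subst pre.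
  destruct (reach_all k m HK t ltac:(lia) ltac:(lia) i ltac:(lia)) as [[L HL] Hall].
  split.
  - destruct (Hall L HL) as [Ia _].
    destruct (step_exists (open_nbrs gvert_eqdec (G_verts k m) (G_adj k m) (rev (pref k t i) ++ []) (GU t i))
                (GU t i) L Ia (Nbrs_notin _ _ _ _ _)) as [L1 H1].
    exists L1. apply run_app. exists L. split; auto. econstructor; eauto. constructor.
  - intros L2 H. apply run_app in H. destruct H as [L1 [H1 H2]].
    inversion H2 as [| d0 L0' u0 r0 L10 L20 Hs Hr]; subst. inversion Hr; subst.
    rewrite app_nil_r in Hs.
    destruct (step_graph k m t i L1 L2 (rev (pref k t i)) HK Hi ltac:(lia) ltac:(lia) (Hall L1 H1) Hs) as [_ E].
    exact E.
Qed.
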